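(* Let $\mathrm{Var}$ be a variety of algebras with one binary multiplication defined by multilinear identities, and let $f(x_1,\dots,x_n)$ be a multilinear nonassociative polynomial in three binary operations $\cdot,\prec,\succ$. If $f=0$ holds on $A^{(d* )}$ for every $A\in\mathrm{Var}$ and every locally nilpotent derivation $d$ of $A$ (i.e. for each $a\in A$ there is $m\ge1$ with $d^m(a)=0$), then $f$ is a generalized derived identity of $\mathrm{Var}$.
   Context: For an algebra $A$ with a derivation $d$, $A^{(d* )}$ denotes the system $(A,\cdot,\prec,\succ)$ where $\cdot$ is the original multiplication, $x\prec y=x\,d(y)$ and $x\succ y=d(x)\,y$. A polynomial $f$ in $\cdot,\prec,\succ$ is a generalized derived identity of $\mathrm{Var}$ if $f=0$ holds on $A^{(d* )}$ for every $A\in\mathrm{Var}$ and every derivation $d$ of $A$. *)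

(* Defs.v *)
From HB Require Import structures.
From mathcomp Require Import all_boot all_order all_algebra.
Set Implicit Arguments. Unset Strict Implicit. Unset Printing Implicit Defensive.
Import GRing.Theory.
Local Open Scope ring_scope.

Inductive term1 : Type :=
  | V1 of nat
  | Mul1 of term1 & term1.

Inductive term3 : Type :=
  | V3 of nat
  | Dot3 of term3 & term3
  | Prec3 of term3 & term3
  | Succ3 of term3 & term3.

Fixpoint vars1 (t : term1) : seq nat :=
  match t with V1 i => [:: i] | Mul1 a b => vars1 a ++ vars1 b end.

Fixpoint vars3 (t : term3) : seq nat :=
  match t with
  | V3 i => [:: i]
  | Dot3 a b | Prec3 a b | Succ3 a b => vars3 a ++ vars3 b
  end.

Definition poly1 (K : Type) := seq (K * term1).
Definition poly3 (K : Type) := seq (K * term3).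

Definition multilinear1 (K : Type) (n : nat) (p : poly1 K) : bool :=
  all (fun c => perm_eq (vars1 c.2) (iota 0 n)) p.
Definition multilinear3 (K : Type) (n : nat) (p : poly3 K) : bool :=
  all (fun c => perm_eq (vars3 c.2) (iota 0 n)) p.

Section Eval.
Variables (K : fieldType) (A : lmodType K) (mul : A -> A -> A) (d : A -> A).

Fixpoint eval1 (v : nat -> A) (t : term1) : A :=
  match t with V1 i => v i | Mul1 a b => mul (eval1 v a) (eval1 v b) end.

Definition evalp1 (v : nat -> A) (p : poly1 K) : A :=
  \sum_(c <- p) c.1 *: eval1 v c.2.

(* evaluation in the system A^(d-star): dot = mul, x prec y = mul x (d y), x succ y = mul (d x) y *)
Fixpoint eval3 (v : nat -> A) (t : term3) : A :=
  match t with
  | V3 i => v i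
  | Dot3 a b => mul (eval3 v a) (eval3 v b)
  | Prec3 a b => mul (eval3 v a) (d (eval3 v b))
  | Succ3 a b => mul (d (eval3 v a)) (eval3 v b)
  end.

Definition evalp3 (v : nat -> A) (p : poly3 K) : A :=
  \sum_(c <- p) c.1 *: eval3 v c.2.

End Eval.

Definition bilinear_mul (K : fieldType) (A : lmodType K) (mul : A -> A -> A) : Prop :=
  (forall (a : K) (x y z : A), mul (a *: x + y) z = a *: mul x z + mul y z) /\
  (forall (a : K) (x y z : A), mul x (a *: y + z) = a *: mul x y + mul x z).

Definition derivation (K : fieldType) (A : lmodType K) (mul : A -> A -> A)
    (d : A -> A) : Prop :=
  (forall (a : K) (x y : A), d (a *: x + y) = a *: d x + d y) /\
  (forall x y : A, d (mul x y) = mul (d x) y + mul x (d y)).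

Definition locally_nilpotent (K : fieldType) (A : lmodType K) (d : A -> A) : Prop :=
  forall a : A, exists m : nat, (1 <= m)%N /\ iter m d a = 0.

Definition in_var (K : fieldType) (S : poly1 K -> Prop)
    (A : lmodType K) (mul : A -> A -> A) : Prop :=
  bilinear_mul mul /\ forall p, S p -> forall v : nat -> A, evalp1 mul v p = 0.

Definition gen_derived_identity (K : fieldType) (S : poly1 K -> Prop)
    (f : poly3 K) : Prop :=
  forall (A : lmodType K) (mul : A -> A -> A) (d : A -> A),
    in_var S mul -> derivation mul d ->
    forall v : nat -> A, evalp3 mul d v f = 0.

(* Main.v *)
Require Import Defs.
From HB Require Import structures.
From mathcomp Require Import all_boot all_order all_algebra.
Set Implicit Arguments. Unset Strict Implicit. Unset Printing Implicit Defensive.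
Import GRing.Theory.
Local Open Scope ring_scope.

Definition lin (K : fieldType) (U W : lmodType K) (f : U -> W) :=
  forall (a : K) (x y : U), f (a *: x + y) = a *: f x + f y.

Lemma lin0 (K : fieldType) (U W : lmodType K) (f : U -> W) : lin f -> f 0 = 0.
Proof.
move=> H; have h := H 1 0 0; rewrite scale1r addr0 scale1r in h.
by apply: (@addrI _ (f 0)); rewrite addr0 -h.
Qed.

Lemma linD (K : fieldType) (U W : lmodType K) (f : U -> W) : lin f ->
  forall x y, f (x + y) = f x + f y.
Proof. by move=> H x y; have := H 1 x y; rewrite !scale1r. Qed.

Lemma linZ (K : fieldType) (U W : lmodType K) (f : U -> W) : lin f ->
  forall a x, f (a *: x) = a *: f x.
Proof. by move=> H a x; have := H a x 0; rewrite !addr0 (lin0 H) addr0. Qed.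

Lemma lin_sum (K : fieldType) (U W : lmodType K) (f : U -> W) (I : Type)
  (r : seq I) (P : pred I) (F : I -> U) : lin f ->
  f (\sum_(i <- r | P i) F i) = \sum_(i <- r | P i) f (F i).
Proof. by move=> H; apply: (big_morph f (linD H) (lin0 H)). Qed.

Lemma lin_comp (K : fieldType) (U V W : lmodType K) (f : V -> W) (g : U -> V) :
  lin f -> lin g -> lin (fun x => f (g x)).
Proof. by move=> Hf Hg a x y; rewrite Hg Hf. Qed.

Lemma lin_add (K : fieldType) (U W : lmodType K) (f g : U -> W) :
  lin f -> lin g -> lin (fun x => f x + g x).
Proof.
move=> Hf Hg a x y; rewrite Hf Hg scalerDr.
by rewrite -!addrA; congr (_ + _); rewrite addrCA.
Qed.

Lemma lin_sumf (K : fieldType) (U W : lmodType K) (I : Type) (r : seq I)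
  (F : I -> U -> W) : (forall i, lin (F i)) -> lin (fun x => \sum_(i <- r) F i x).
Proof.
move=> H; elim: r => [|i r IH] a x y; first by rewrite !big_nil scaler0 addr0.
by rewrite !big_cons; apply: (lin_add (H i) IH).
Qed.

(* truncated graded algebra *)
Definition tB (K : fieldType) (A : lmodType K) (N : nat) := {ffun 'I_N -> A}.

Definition te (K : fieldType) (A : lmodType K) (N : nat) (k : nat) (x : A) : {ffun 'I_N -> A} :=
  [ffun i : 'I_N => if (i == k :> nat) then x else 0].

Lemma teE (K : fieldType) (A : lmodType K) N k (x : A) (i : 'I_N) :
  te N k x i = if (i == k :> nat) then x else 0.
Proof. by rewrite ffunE. Qed.

Lemma te_lin (K : fieldType) (A : lmodType K) N k : lin (@te K A N k).
Proof.
move=> a x y; apply/ffunP => i; rewrite !ffunE.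
by case: ifP => _; rewrite ?scaler0 ?addr0.
Qed.

Lemma te_big (K : fieldType) (A : lmodType K) N k (x : A) : (N <= k)%N -> te N k x = 0.
Proof.
move=> Hk; apply/ffunP => i; rewrite !ffunE.
case: eqP => // Hi; move: (ltn_ord i); rewrite Hi => H.
by move: (leq_trans H Hk); rewrite ltnn.
Qed.

Lemma te_decomp (K : fieldType) (A : lmodType K) N (b : {ffun 'I_N -> A}) :
  b = \sum_(i < N) te N i (b i).
Proof.
apply/ffunP => j; rewrite sum_ffunE (bigD1 j) //= teE eqxx big1 ?addr0 //.
move=> i Hij; rewrite teE; case: eqP => // H.
have Hji : i = j by apply: ord_inj; rewrite H.
 by rewrite Hji eqxx in Hij.
Qed.

Lemma sum_collapse (W : nmodType) N (k : nat) (F : nat -> W) :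
  \sum_(i < N) (if (i == k :> nat) then F i else 0) = if (k < N)%N then F k else 0.
Proof.
rewrite -big_mkcond /=; case: ltnP => Hk.
  rewrite (big_pred1 (Ordinal Hk)) //= => i; rewrite -val_eqE.
rewrite big_pred0 // => i; apply/eqP => Hi; move: (ltn_ord i).
by rewrite Hi ltnNge Hk.
Qed.

Lemma lin_if (K : fieldType) (U W : lmodType K) (f : U -> W) (c : bool) x :
  lin f -> f (if c then x else 0) = if c then f x else 0.
Proof. by move=> H; case: c => //; rewrite (lin0 H). Qed.

Lemma mul_linl (K : fieldType) (A : lmodType K) (mul : A -> A -> A) z :
  bilinear_mul mul -> lin (fun x => mul x z).
Proof. by move=> [H _] a x y; rewrite H. Qed.

Lemma mul_linr (K : fieldType) (A : lmodType K) (mul : A -> A -> A) z :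
  bilinear_mul mul -> lin (mul z).
Proof. by move=> [_ H] a x y; rewrite H. Qed.

Lemma comp_lin (K : fieldType) (A : lmodType K) N (i : 'I_N) :
  lin (fun b : {ffun 'I_N -> A} => b i).
Proof. by move=> a x y; rewrite !ffunE. Qed.

Definition mulB (K : fieldType) (A : lmodType K) (mul : A -> A -> A) N
  (b c : {ffun 'I_N -> A}) : {ffun 'I_N -> A} :=
  \sum_(i < N) \sum_(j < N) te N (i + j) (mul (b i) (c j)).

Definition DB (K : fieldType) (A : lmodType K) (d : A -> A) N
  (b : {ffun 'I_N -> A}) : {ffun 'I_N -> A} :=
  \sum_(i < N) te N i.+1 (d (b i)).

Lemma mulB_linl (K : fieldType) (A : lmodType K) (mul : A -> A -> A) N c :
  bilinear_mul mul -> lin (fun b => @mulB K A mul N b c).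
Proof.
move=> Hm; rewrite /mulB; apply: lin_sumf => i; apply: lin_sumf => j.
move=> a x y; rewrite !ffunE.
by rewrite (mul_linl _ Hm) te_lin.
Qed.

Lemma mulB_linr (K : fieldType) (A : lmodType K) (mul : A -> A -> A) N b :
  bilinear_mul mul -> lin (@mulB K A mul N b).
Proof.
move=> Hm; rewrite /mulB; apply: lin_sumf => i; apply: lin_sumf => j.
move=> a x y; rewrite !ffunE.
by rewrite (mul_linr _ Hm) te_lin.
Qed.

Lemma DB_lin (K : fieldType) (A : lmodType K) (d : A -> A) N :
  lin d -> lin (@DB K A d N).
Proof.
move=> Hd; rewrite /DB; apply: lin_sumf => i.
move=> a x y; rewrite !ffunE.
by rewrite Hd te_lin.
Qed.

Lemma mulB_e (K : fieldType) (A : lmodType K) (mul : A -> A -> A) N i j x y :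
  bilinear_mul mul -> @mulB K A mul N (te N i x) (te N j y) = te N (i + j) (mul x y).
Proof.
move=> Hm; rewrite /mulB.
rewrite (eq_bigr (fun i' : 'I_N => if (i' == i :> nat) then
   \sum_(j' < N) te N (i' + j') (mul x (te N j y j')) else 0)); last first.
  move=> i' _; rewrite teE; case: eqP => _ //; apply: big1 => j' _.
  by rewrite (lin0 (mul_linl _ Hm)) (lin0 (te_lin _ _)).
rewrite (sum_collapse N i (fun k => \sum_(j' < N) te N (k + j') (mul x (te N j y j')))).
case: ltnP => Hi; last by rewrite te_big // (leq_trans Hi) // leq_addr.
rewrite (eq_bigr (fun j' : 'I_N => if (j' == j :> nat) then
   te N (i + j') (mul x y) else 0)); last first.
  move=> j' _; rewrite teE; case: eqP => _ //.
  by rewrite (lin0 (mul_linr _ Hm)) (lin0 (te_lin _ _)).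
rewrite (sum_collapse N j (fun k => te N (i + k) (mul x y))).
case: ltnP => Hj //; by rewrite te_big // (leq_trans Hj) // leq_addl.
Qed.

Lemma DB_e (K : fieldType) (A : lmodType K) (d : A -> A) N i x :
  lin d -> @DB K A d N (te N i x) = te N i.+1 (d x).
Proof.
move=> Hd; rewrite /DB.
rewrite (eq_bigr (fun i' : 'I_N => if (i' == i :> nat) then
   te N i'.+1 (d x) else 0)); last first.
  by move=> i' _; rewrite teE; case: eqP => _ //; rewrite (lin0 Hd) (lin0 (te_lin _ _)).
rewrite (sum_collapse N i (fun k => te N k.+1 (d x))).
by case: ltnP => Hi //; rewrite te_big // (leq_trans Hi).
Qed.

Lemma mulB_sum (K : fieldType) (A : lmodType K) (mul : A -> A -> A) N b c :
  bilinear_mul mul -> @mulB K A mul N b c =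
  \sum_(i < N) \sum_(j < N) mulB mul (te N i (b i)) (te N j (c j)).
Proof.
move=> Hm; rewrite {1}(te_decomp b) (lin_sum _ _ _ (mulB_linl _ Hm)).
apply: eq_bigr => i _; rewrite {1}(te_decomp c) (lin_sum _ _ _ (mulB_linr _ Hm)).
by [].
Qed.

Lemma DB_der (K : fieldType) (A : lmodType K) (mul : A -> A -> A) (d : A -> A) N :
  bilinear_mul mul -> derivation mul d -> derivation (@mulB K A mul N) (@DB K A d N).
Proof.
move=> Hm [Hd Hl]; split; first exact: DB_lin.
move=> b c.
have E1 : mulB mul (DB d b) c =
   \sum_(i < N) \sum_(j < N) te N (i.+1 + j) (mul (d (b i)) (c j)).
  rewrite {1}/DB (lin_sum _ _ _ (mulB_linl c Hm)); apply: eq_bigr => i _.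
  rewrite {1}(te_decomp c) (lin_sum _ _ _ (mulB_linr _ Hm)); apply: eq_bigr => j _.
  by rewrite mulB_e.
have E2 : mulB mul b (DB d c) =
   \sum_(i < N) \sum_(j < N) te N (i + j.+1) (mul (b i) (d (c j))).
  rewrite {1}(te_decomp b) (lin_sum _ _ _ (mulB_linl _ Hm)); apply: eq_bigr => i _.
  rewrite {1}/DB (lin_sum _ _ _ (mulB_linr _ Hm)); apply: eq_bigr => j _.
  by rewrite mulB_e.
rewrite E1 E2 {1}/mulB (lin_sum _ _ _ (DB_lin Hd)) -big_split /=.
apply: eq_bigr => i _; rewrite (lin_sum _ _ _ (DB_lin Hd)) -big_split /=.
apply: eq_bigr => j _; rewrite DB_e // Hl (linD (te_lin _ _)).
by rewrite addSn addnS.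
Qed.

Lemma iterDB (K : fieldType) (A : lmodType K) (d : A -> A) N m (b : {ffun 'I_N -> A}) :
  lin d -> iter m (@DB K A d N) b = \sum_(i < N) te N (i + m) (iter m d (b i)).
Proof.
move=> Hd; elim: m => [|m IH]; first by rewrite /= {1}(te_decomp b); apply: eq_bigr => i _; rewrite addn0.
rewrite iterS IH (lin_sum _ _ _ (DB_lin Hd)); apply: eq_bigr => i _.
by rewrite DB_e // addnS iterS.
Qed.

Lemma DB_nil (K : fieldType) (A : lmodType K) (d : A -> A) N :
  (1 <= N)%N -> lin d -> locally_nilpotent (@DB K A d N).
Proof.
move=> HN Hd b; exists N; split => //; rewrite iterDB //.
by apply: big1 => i _; rewrite te_big // leq_addl.
Qed.

Lemma eval1_pure (K : fieldType) (A : lmodType K) (mul : A -> A -> A) N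
  (j : nat -> nat) (a : nat -> A) t : bilinear_mul mul ->
  eval1 (@mulB K A mul N) (fun i => te N (j i) (a i)) t =
  te N (\sum_(k <- vars1 t) j k) (eval1 mul a t).
Proof.
move=> Hm; elim: t => [i|t1 IH1 t2 IH2] /=; first by rewrite big_cons big_nil addn0.
by rewrite IH1 IH2 mulB_e // big_cat.
Qed.

Lemma lin_scale (K : fieldType) (U W : lmodType K) (f : U -> W) (k : K) :
  lin f -> lin (fun x => k *: f x).
Proof.
move=> H a x y; rewrite H scalerDr !scalerA mulrC.
by [].
Qed.

Lemma evalp1_pure (K : fieldType) (A : lmodType K) (mul : A -> A -> A) N
  (j : nat -> nat) (a : nat -> A) m p : bilinear_mul mul -> multilinear1 m p ->
  evalp1 mul a p = 0 ->
  evalp1 (@mulB K A mul N) (fun i => te N (j i) (a i)) p = 0.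
Proof.
rewrite /multilinear1 => Hm Hp H0.
transitivity (te N (\sum_(k <- iota 0 m) j k) (evalp1 mul a p)); last first.
  by rewrite H0 (lin0 (te_lin _ _)).
rewrite /evalp1; elim: p Hp {H0} => [|c p IH] /=.
  by rewrite !big_nil (lin0 (te_lin _ _)).
move=> /andP [Hc Hp]; rewrite !big_cons IH // te_lin eval1_pure //.
by rewrite (perm_big _ Hc).
Qed.

Definition upd (T : Type) (v : nat -> T) (r : nat) (x : T) : nat -> T :=
  fun i => if i == r then x else v i.

Lemma eval1_ext (K : fieldType) (A : lmodType K) (mul : A -> A -> A) v w t :
  (forall i, i \in vars1 t -> v i = w i) -> eval1 mul v t = eval1 mul w t.
Proof.
elim: t => [i|t1 IH1 t2 IH2] /= H; first by apply: H; rewrite mem_head.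
rewrite IH1 ?IH2 // => i Hi; apply: H; rewrite mem_cat Hi ?orbT //.
Qed.

Lemma evalp1_ext (K : fieldType) (A : lmodType K) (mul : A -> A -> A) v w p :
  (forall i, v i = w i) -> evalp1 mul v p = evalp1 mul w p.
Proof.
by move=> H; apply: eq_bigr => c _; congr (_ *: _); apply: eval1_ext => i _.
Qed.

Lemma eval1_upd0 (K : fieldType) (A : lmodType K) (mul : A -> A -> A) v r x t :
  r \notin vars1 t -> eval1 mul (upd v r x) t = eval1 mul v t.
Proof.
move=> Hr; apply: eval1_ext => i Hi; rewrite /upd; case: eqP => // E.
by rewrite -E Hi in Hr.
Qed.

Lemma eval1_upd_lin (K : fieldType) (A : lmodType K) (mul : A -> A -> A) v r t :
  bilinear_mul mul -> count_mem r (vars1 t) = 1%N ->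
  lin (fun x => eval1 mul (upd v r x) t).
Proof.
move=> Hm; elim: t => [i|t1 IH1 t2 IH2] /=.
  rewrite addn0 => /eqP; rewrite eqb1 => /eqP Hi.
  by move=> a x y; rewrite /upd eq_sym Hi eqxx.
rewrite count_cat.
case E1: (count_mem r (vars1 t1)) => [|[|k]]; rewrite ?add0n ?add1n //.
- move=> H2 a x y; have N1 : r \notin vars1 t1 by apply/count_memPn.
  by rewrite !(eval1_upd0 mul v _ N1) IH2 // (mul_linr _ Hm).
- move=> /eqP; rewrite eqSS => /eqP E2.
  have N2 : r \notin vars1 t2 by apply/count_memPn.
  move=> a x y; rewrite !(eval1_upd0 mul v _ N2) IH1 //.
  exact: (mul_linl _ Hm).
Qed.

Lemma evalp1_upd_lin (K : fieldType) (A : lmodType K) (mul : A -> A -> A) v r p :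
  bilinear_mul mul -> all (fun c => count_mem r (vars1 c.2) == 1%N) p ->
  lin (fun x => evalp1 mul (upd v r x) p).
Proof.
move=> Hm; elim: p => [|c p IH] /=.
  by move=> _ a x y; rewrite /evalp1 !big_nil scaler0 addr0.
move=> /andP [/eqP Hc Hp] a x y; rewrite /evalp1 !big_cons.
exact: (lin_add (lin_scale c.1 (eval1_upd_lin v Hm Hc)) (IH Hp)).
Qed.

Lemma ml_count (K : fieldType) m (p : poly1 K) r : multilinear1 m p -> (r < m)%N ->
  all (fun c => count_mem r (vars1 c.2) == 1%N) p.
Proof.
move=> Hp Hr; elim: p Hp => [|c p IH] //= /andP [Hc Hp]; rewrite IH // andbT.
move/permP: Hc => ->; rewrite count_uniq_mem ?iota_uniq // mem_iota add0n Hr.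
by [].
Qed.

Lemma evalp1_ext_ml (K : fieldType) (A : lmodType K) (mul : A -> A -> A) v w m p :
  multilinear1 m p -> (forall i, (i < m)%N -> v i = w i) ->
  evalp1 mul v p = evalp1 mul w p.
Proof.
move=> Hp H; rewrite /evalp1; elim: p Hp => [|c p IH] /=; first by rewrite !big_nil.
move=> /andP [Hc Hp]; rewrite !big_cons IH //; congr (_ *: _ + _).
apply: eval1_ext => i Hi; apply: H; move: Hi; rewrite (perm_mem Hc) mem_iota.
by [].
Qed.

Lemma in_var_B (K : fieldType) (S : poly1 K -> Prop) (A : lmodType K)
  (mul : A -> A -> A) N :
  (forall p, S p -> exists m : nat, multilinear1 m p) ->
  in_var S mul -> in_var S (@mulB K A mul N).
Proof.
move=> HS [Hm HA].
have HmB : bilinear_mul (@mulB K A mul N).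
  split=> a x y z; [exact: (mulB_linl z Hm) | exact: (mulB_linr x Hm)].
split=> //.
move=> p Sp v; have [m Hp] := HS p Sp.
have P : forall r, (r <= m)%N -> forall (j : nat -> nat) (a : nat -> A) v,
    (forall i, (r <= i)%N -> v i = te N (j i) (a i)) -> evalp1 (@mulB K A mul N) v p = 0.
  elim=> [|r IH] Hr j a v' Hv.
    rewrite (evalp1_ext _ (w := fun i => te N (j i) (a i))); last by move=> i; apply: Hv.
    exact: (evalp1_pure _ _ Hm Hp (HA p Sp a)).
  rewrite (evalp1_ext _ (w := upd v' r (v' r))); last first.
    by move=> i; rewrite /upd; case: eqP => // ->.
  rewrite (te_decomp (v' r)).
  rewrite (lin_sum _ _ _ (evalp1_upd_lin v' HmB (ml_count Hp Hr))).
  apply: big1 => k _.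
  apply: (IH (ltnW Hr) (upd j r k) (upd a r (v' r k))) => i Hi.
  rewrite /upd; case: eqP => // Hir.
  by apply: Hv; rewrite ltn_neqAle Hi andbT eq_sym; apply/eqP.
rewrite (evalp1_ext_ml (w := fun i => if (i < m)%N then v i else 0) _ Hp); last first.
  by move=> i ->.
apply: (P m (leqnn m) (fun _ => 0%N) (fun _ => 0)) => i Hi.
by rewrite ltnNge Hi /= (lin0 (te_lin _ _)).
Qed.

Fixpoint nd (t : term3) : nat :=
  match t with
  | V3 _ => 0%N
  | Dot3 a b => (nd a + nd b)%N
  | Prec3 a b => (nd a + (nd b).+1)%N
  | Succ3 a b => ((nd a).+1 + nd b)%N
  end.

Lemma eval3_B (K : fieldType) (A : lmodType K) (mul : A -> A -> A) (d : A -> A) N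
  (v : nat -> A) t : bilinear_mul mul -> lin d ->
  eval3 (@mulB K A mul N) (@DB K A d N) (fun i => te N 0 (v i)) t =
  te N (nd t) (eval3 mul d v t).
Proof.
move=> Hm Hd; elim: t => [i|t1 IH1 t2 IH2|t1 IH1 t2 IH2|t1 IH1 t2 IH2] //=;
  by rewrite IH1 IH2 ?DB_e // mulB_e.
Qed.

Definition phi (K : fieldType) (A : lmodType K) N (b : {ffun 'I_N -> A}) : A :=
  \sum_(i < N) b i.

Lemma phi_lin (K : fieldType) (A : lmodType K) N : lin (@phi K A N).
Proof.
move=> a x y; rewrite /phi scaler_sumr -big_split; apply: eq_bigr => i _.
by rewrite !ffunE.
Qed.

Lemma phi_te (K : fieldType) (A : lmodType K) N k (x : A) : (k < N)%N -> phi (te N k x) = x.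
Proof.
move=> Hk; rewrite /phi (eq_bigr (fun i : 'I_N => if (i == k :> nat) then x else 0)).
  by rewrite (sum_collapse N k (fun _ => x)) Hk.
by move=> i _; rewrite teE.
Qed.

Lemma phi_eval (K : fieldType) (A : lmodType K) (mul : A -> A -> A) (d : A -> A) N
  (v : nat -> A) (f : poly3 K) : bilinear_mul mul -> lin d ->
  all (fun c => nd c.2 < N)%N f ->
  phi (evalp3 (@mulB K A mul N) (@DB K A d N) (fun i => te N 0 (v i)) f) =
  evalp3 mul d v f.
Proof.
move=> Hm Hd; rewrite /evalp3; elim: f => [|c f IH] /=.
  by rewrite !big_nil (lin0 (@phi_lin K A N)).
move=> /andP [Hc Hf]; rewrite !big_cons phi_lin IH // eval3_B // phi_te //.
Qed.

Lemma max_all (K : fieldType) (f : poly3 K) M :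
  (\max_(c <- f) nd c.2 <= M)%N -> all (fun c => nd c.2 <= M)%N f.
Proof.
elim: f => [|c f IH] //=; rewrite big_cons geq_max => /andP [H1 H2].
by rewrite H1 IH.
Qed.

Theorem mainTheorem10 (K : fieldType) (S : poly1 K -> Prop) (n : nat) (f : poly3 K) :
  (forall p, S p -> exists m : nat, multilinear1 m p) ->
  multilinear3 n f ->
  (forall (A : lmodType K) (mul : A -> A -> A) (d : A -> A),
      in_var S mul -> derivation mul d -> locally_nilpotent d ->
      forall v : nat -> A, evalp3 mul d v f = 0) ->
  gen_derived_identity S f.
Proof.
move=> HS _ Hloc A mul d Hvar Hder v.
have Hm := Hvar.1; have Hd := Hder.1.
pose N := (\max_(c <- f) nd c.2).+1.
have H0 := Hloc _ (@mulB K A mul N) (@DB K A d N) (in_var_B N HS Hvar)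
  (DB_der N Hm Hder) (DB_nil (ltn0Sn _) Hd) (fun i => te N 0 (v i)).
rewrite -(phi_eval v Hm Hd (N := N)); first by rewrite H0 (lin0 (@phi_lin K A N)).
exact: max_all.
Qed.
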